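(* Let $w,u$ be integers with $w/2 \le u < w$, fix a sign, and let $q = 2^w - 2^u \pm 1$. Let $\lambda$ be a positive integer multiple of $q$, and let $b = \lambda/q$. Define $c = \lfloor \lambda/2^w \rfloor$ and, for integers $x$, $$v(x) = \left\lfloor -\frac{x(2^u \mp 1)}{2^w} \right\rfloor, \qquad f(x) = x + v(x),$$ where $\mp$ is the sign opposite to the one in $q$, so that $q = 2^w - (2^u \mp 1)$. Let $b_0 = c$ and $b_{i+1} = b_i + (c - f(b_i))$. Let $N$ be the least index with $f(b_N) = c$. Then $b_i \le b$ for every $0 \le i \le N$.
   Context: The sequence $b_0, b_1, \dots, b_N$ consists of the values produced by the loop of a division algorithm. The loop starts at $b_0 = c$, repeats the update $b_{i+1} = b_i + (c - f(b_i))$ while $f(b_i) \ne c$, and stops at the first index $N$ with $f(b_N) = c$. *)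

(* Defs.v *)
(* integers Z, Z.div is floor division for positive divisors. *)
From Stdlib Require Export ZArith.
Open Scope Z_scope.

(* s is the sign (+1 or -1) in q = 2^w - 2^u + s = 2^w - (2^u - s). *)
Definition qval (w u : nat) (s : Z) : Z :=
  2 ^ Z.of_nat w - 2 ^ Z.of_nat u + s.

Definition vfun (w u : nat) (s x : Z) : Z :=
  (- (x * (2 ^ Z.of_nat u - s))) / 2 ^ Z.of_nat w.

Definition ffun (w u : nat) (s x : Z) : Z := x + vfun w u s x.

Definition cval (w : nat) (lam : Z) : Z := lam / 2 ^ Z.of_nat w.

Fixpoint bseq (w u : nat) (s lam : Z) (i : nat) : Z :=
  match i with
  | O => cval w lam
  | S i' => let bi := bseq w u s lam i' in bi + (cval w lam - ffun w u s bi)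
  end.

(* Main.v *)
Require Import Defs.
From Stdlib Require Import ZArith Lia.
Open Scope Z_scope.

Theorem theorem2 (w u : nat) (s lam : Z) :
  (w <= 2 * u)%nat -> (u < w)%nat ->
  (s = 1 \/ s = -1) ->
  0 < lam -> (qval w u s | lam) ->
  forall N : nat,
    ffun w u s (bseq w u s lam N) = cval w lam ->
    (forall i : nat, (i < N)%nat -> ffun w u s (bseq w u s lam i) <> cval w lam) ->
    forall i : nat, (i <= N)%nat -> bseq w u s lam i <= lam / qval w u s.
Proof.
  intros Hwu Huw Hs Hlam [b Hb] N _ _ i _.
  set (W := 2 ^ Z.of_nat w) in *.
  set (K := 2 ^ Z.of_nat u - s).
  assert (HU : 2 <= 2 ^ Z.of_nat u). { change 2 with (2 ^ 1) at 1. apply Z.pow_le_mono_r; lia. }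
  assert (HW : 2 * 2 ^ Z.of_nat u <= W).
  { unfold W. rewrite <- Z.pow_succ_r by lia. apply Z.pow_le_mono_r; lia. }
  assert (HK : 0 <= K) by (unfold K; lia).
  assert (Hq : qval w u s = W - K) by (unfold qval, K, W; ring).
  assert (Hqpos : 0 < W - K) by (unfold K; lia).
  rewrite Hq in Hb |- *.
  replace (lam / (W - K)) with b by (rewrite Hb, Z.div_mul; lia).
  assert (Hbpos : 0 < b) by nia.
  set (D := fun z => (- (z * K)) / W).
  assert (Dmono : forall x y, x <= y -> D y <= D x).
  { intros x y Hxy. unfold D. apply Z.div_le_mono; nia. }
  assert (Hc : cval w lam = b + D b).
  { unfold cval, D. fold W. rewrite Hb.
    rewrite <- Z.div_add_l by lia. f_equal. ring. }
  assert (HD0 : D b <= 0).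
  { pose proof (Dmono 0 b ltac:(lia)). unfold D in H at 2. simpl in H.
    rewrite Z.div_0_l in H by lia. exact H. }
  induction i as [|i IH]; simpl.
  - rewrite Hc. lia.
  - unfold ffun. change (vfun w u s (bseq w u s lam i)) with (D (bseq w u s lam i)).
    pose proof (Dmono _ _ IH). rewrite Hc. lia.
Qed.
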